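(* Let $\Sigma$ be a set. Any subset of $T^1(\Sigma)$ closed under pruned multiplication, $+$ and $*$ forms an adequate semigroup under these operations (with $+$ and $*$ being the adequate-semigroup operations). Any subset of $T^1(\Sigma)$ closed under pruned multiplication and $+$ [respectively, pruned multiplication and $*$] forms a left adequate [respectively, right adequate] semigroup under these operations.
   Context: Semigroup notions: for a semigroup $S$ let $S^1=S$ if $S$ is a monoid and otherwise $S$ with an identity adjoined. $a\,\mathcal{L}^*\,b$ iff for all $x,y\in S^1$: $ax=ay\Leftrightarrow bx=by$; $a\,\mathcal{R}^*\,b$ iff for all $x,y\in S^1$: $xa=ya\Leftrightarrow xb=yb$. $S$ is left adequate if its idempotents commute and every $\mathcal{R}^*$-class contains an idempotent (necessarily unique, denoted $x^+$ for the class of $x$); right adequate if idempotents commute and every $\mathcal{L}^*$-class contains an idempotent ($x^*$); adequate if both. Trees: a $\Sigma$-tree is a finite directed graph whose underlying undirected graph is a tree, edges labelled by elements of $\Sigma$, with distinguished start and end vertices such that there is a (possibly empty) directed path from start to end vertex. A morphism $X\to Y$ maps vertices to vertices and edges to edges, preserving initial vertex, terminal vertex and label of edges and mapping start/end vertex to start/end vertex; isomorphisms are morphisms bijective on vertices and edges. A retraction is an idempotent morphism $X\to X$, its image being a retract; $X$ is pruned if it has no non-identity retraction. Every tree $X$ has a pruned retract, unique up to isomorphism, with isomorphism type $\overline{X}$. $T^1(\Sigma)$ is the set of isomorphism types of pruned $\Sigma$-trees. Unpruned operations: $X\times Y$ identifies the end vertex of (a copy of) $X$ with the start vertex of (a disjoint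 copy of) $Y$, start vertex that of $X$, end vertex that of $Y$; $X^{(+)}$ is $X$ with end vertex moved to the start vertex; $X^{( * )}$ is $X$ with start vertex moved to the end vertex. Pruned operations: $XY=\overline{X\times Y}$, $X^+=\overline{X^{(+)}}$, $X^*=\overline{X^{( * )}}$. *)

(* Defs.v *)
From HB Require Import structures.
From mathcomp Require Import all_boot.
Set Implicit Arguments. Unset Strict Implicit. Unset Printing Implicit Defensive.

Section Trees.
Variable Sigma : Type.

Record graph := Graph {
  V : finType; E : finType;
  src : E -> V; tgt : E -> V; lab : E -> Sigma;
  st : V; en : V }.
Arguments st g : clear implicits.
Arguments en g : clear implicits.

Inductive uconn (X : graph) : V X -> V X -> Prop :=
| uconn_refl v : uconn v v
| uconn_fwd e w : uconn (tgt e) w -> uconn (src e) w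
| uconn_bwd e w : uconn (src e) w -> uconn (tgt e) w.

Inductive dpath (X : graph) : V X -> V X -> Prop :=
| dpath_refl v : dpath v v
| dpath_step e w : dpath (tgt e) w -> dpath (src e) w.

Definition is_tree (X : graph) : Prop :=
  (forall u v : V X, uconn u v) /\ #|V X| = #|E X|.+1 /\ dpath (st X) (en X).

Record morph (X Y : graph) := Morph {
  mv : V X -> V Y; me : E X -> E Y;
  m_src : forall e, src (me e) = mv (src e);
  m_tgt : forall e, tgt (me e) = mv (tgt e);
  m_lab : forall e, lab (me e) = lab e;
  m_st : mv (st X) = st Y;
  m_en : mv (en X) = en Y }.

Definition iso (X Y : graph) : Prop :=
  exists f : morph X Y, bijective (mv f) /\ bijective (me f).

Definition retraction (X : graph) (r : morph X X) : Prop :=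
  (forall v, mv r (mv r v) = mv r v) /\ (forall e, me r (me r e) = me r e).

Definition pruned (X : graph) : Prop :=
  forall r : morph X X, retraction r ->
    (forall v, mv r v = v) /\ (forall e, me r e = e).

(* the image (retract) of an endomorphism, as the subgraph of fixed points *)
Section Image.
Variables (X : graph) (r : morph X X).
Definition imV := {v : V X | mv r v == v}.
Definition imE := {e : E X | me r e == e}.
Lemma im_src_fix (e : imE) : mv r (src (val e)) == src (val e).
Proof. by rewrite -m_src (eqP (valP e)). Qed.
Lemma im_tgt_fix (e : imE) : mv r (tgt (val e)) == tgt (val e).
Proof. by rewrite -m_tgt (eqP (valP e)). Qed.
Lemma im_st_fix : mv r (st X) == st X. Proof. by rewrite m_st. Qed.
Lemma im_en_fix : mv r (en X) == en X. Proof. by rewrite m_en. Qed.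
Definition image : graph :=
  @Graph imV imE
    (fun e => exist _ (src (val e)) (im_src_fix e))
    (fun e => exist _ (tgt (val e)) (im_tgt_fix e))
    (fun e => lab (val e))
    (exist _ (st X) im_st_fix) (exist _ (en X) im_en_fix).
End Image.

Definition prunes (W Z : graph) : Prop :=
  exists r : morph W W, retraction r /\ pruned (image r) /\ iso (image r) Z.

(* unpruned product X x Y: end vertex of X glued to start vertex of Y *)
Section Prod.
Variables X Y : graph.
Definition prodV := (V X + {v : V Y | v != st Y})%type.
Definition inj2 (v : V Y) : prodV :=
  match insub v with Some w => inr w | None => inl (en X) end.
Definition prodT : graph :=
  @Graph prodV (E X + E Y)%type
    (fun e => match e with inl e => inl (src e) | inr e => inj2 (src e) end)
    (fun e => match e with inl e => inl (tgt e) | inr e => inj2 (tgt e) end)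
    (fun e => match e with inl e => lab e | inr e => lab e end)
    (inl (st X)) (inj2 (en Y)).
End Prod.

Definition plusT (X : graph) : graph :=
  @Graph (V X) (E X) (@src X) (@tgt X) (@lab X) (st X) (st X).
Definition starT (X : graph) : graph :=
  @Graph (V X) (E X) (@src X) (@tgt X) (@lab X) (en X) (en X).

(* Isomorphism types are represented as the (Prop-valued) class of all
   graphs isomorphic to a representative. *)
Definition tclass := graph -> Prop.
Definition isoclass (X : graph) : tclass := fun Y => iso X Y.

Definition T1 (C : tclass) : Prop :=
  exists X, is_tree X /\ pruned X /\ C = isoclass X.

Definition tmul (C D : tclass) : tclass :=
  fun Z => exists X Y, C X /\ D Y /\ prunes (prodT X Y) Z.
Definition tplus (C : tclass) : tclass :=
  fun Z => exists X, C X /\ prunes (plusT X) Z.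
Definition tstar (C : tclass) : tclass :=
  fun Z => exists X, C X /\ prunes (starT X) Z.

End Trees.

Section Semigroups.
Variables (A : Type) (S : A -> Prop) (m : A -> A -> A).

Definition is_subsemigroup : Prop :=
  (forall a b, S a -> S b -> S (m a b)) /\
  (forall a b c, S a -> S b -> S c -> m a (m b c) = m (m a b) c).

Definition idem (e : A) : Prop := m e e = e.

Definition idems_commute : Prop :=
  forall e f, S e -> S f -> idem e -> idem f -> m e f = m f e.

(* elements of S^1: None is the identity (adjoined; if S is already a
   monoid, quantifying over it as well yields the same relations) *)
Definition inS1 (x : option A) : Prop :=
  match x with None => True | Some y => S y end.
Definition rmul (a : A) (x : option A) : A :=
  match x with None => a | Some y => m a y end.
Definition lmul (x : option A) (a : A) : A :=
  match x with None => a | Some y => m y a end.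

Definition Lstar (a b : A) : Prop :=
  forall x y, inS1 x -> inS1 y -> (rmul a x = rmul a y <-> rmul b x = rmul b y).
Definition Rstar (a b : A) : Prop :=
  forall x y, inS1 x -> inS1 y -> (lmul x a = lmul y a <-> lmul x b = lmul y b).

Definition left_adequate : Prop :=
  is_subsemigroup /\ idems_commute /\
  forall a, S a -> exists e, S e /\ idem e /\ Rstar a e.
Definition right_adequate : Prop :=
  is_subsemigroup /\ idems_commute /\
  forall a, S a -> exists e, S e /\ idem e /\ Lstar a e.
Definition adequate : Prop := left_adequate /\ right_adequate.

Definition plus_is_Rstar_idem (p : A -> A) : Prop :=
  forall a, S a -> S (p a) /\ idem (p a) /\ Rstar a (p a).
Definition star_is_Lstar_idem (s : A -> A) : Prop :=
  forall a, S a -> S (s a) /\ idem (s a) /\ Lstar a (s a).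

End Semigroups.

(* Main.v *)
Require Import Defs.
From mathcomp Require Import all_boot zify.
From Stdlib Require Import FunctionalExtensionality PropExtensionality.
Set Implicit Arguments. Unset Strict Implicit. Unset Printing Implicit Defensive.

Section Th.
Variable Sigma : Type.
Local Notation graph := (graph Sigma).
Implicit Types X Y Z W : graph.

Definition mid X : morph X X :=
  @Morph _ X X id id (fun _ => erefl) (fun _ => erefl) (fun _ => erefl) erefl erefl.

Definition mcomp X Y Z (g : morph Y Z) (f : morph X Y) : morph X Z.
Proof.
refine (@Morph _ X Z (fun v => mv g (mv f v)) (fun e => me g (me f e)) _ _ _ _ _).
- by move=> e; rewrite !m_src.
- by move=> e; rewrite !m_tgt.
- by move=> e; rewrite !m_lab.
- by rewrite !m_st.
- by rewrite !m_en.
Defined.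

Definition hom X Y := exists f : morph X Y, True.
Definition homeq X Y := hom X Y /\ hom Y X.

Lemma hom_trans X Y Z : hom X Y -> hom Y Z -> hom X Z.
Proof. by move=> [f _] [g _]; exists (mcomp g f). Qed.
Lemma homeq_refl X : homeq X X.
Proof. by split; exists (mid X). Qed.
Lemma homeq_sym X Y : homeq X Y -> homeq Y X.
Proof. by case. Qed.
Lemma homeq_trans X Y Z : homeq X Y -> homeq Y Z -> homeq X Z.
Proof. by move=> [a b] [c d]; split; apply: hom_trans; eauto. Qed.

Lemma iter_period (T : finType) (f : T -> T) :
  exists i p, 0 < p /\ forall x, iter (i + p) f x = iter i f x.
Proof.
pose g (n : 'I_#|{ffun T -> T}|.+1) := [ffun x => iter n f x].
have : ~~ injectiveb g.
  apply/negP => /injectiveP inj. have := leq_card g inj.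
  by rewrite card_ord ltnn.
case/injectivePn => i [j ne eq].
have H : forall x, iter i f x = iter j f x.
  by move=> x; move/ffunP: eq => /(_ x); rewrite !ffunE.
case: (ltngtP i j) => [lt|lt|eqij].
- exists i, (j - i); split; first by rewrite subn_gt0.
  by move=> x; rewrite subnKC ?(ltnW lt) // H.
- exists j, (i - j); split; first by rewrite subn_gt0.
  by move=> x; rewrite subnKC ?(ltnW lt) // H.
- by move: ne; rewrite (val_inj eqij) eqxx.
Qed.

Lemma iter_idem (T : finType) (f : T -> T) :
  exists k, 0 < k /\ forall x, iter (k + k) f x = iter k f x.
Proof.
have [i [p [p0 H]]] := iter_period f.
have per : forall q n x, i <= n -> iter (n + p * q) f x = iter n f x.
  elim=> [|q IH] n x le; first by rewrite muln0 addn0.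
  rewrite mulnS addnCA iterD IH // -iterD addnC -(subnK le) -addnA iterD H.
  by rewrite -iterD.
exists (p * i.+1); split; first by rewrite muln_gt0 p0.
move=> x; rewrite per //.
by apply: leq_trans (leq_pmull _ p0); apply: leqnSn.
Qed.

Fixpoint mpow X (h : morph X X) n : morph X X :=
  if n is n'.+1 then mcomp h (mpow h n') else mid X.

Lemma mpow_v X (h : morph X X) n v : mv (mpow h n) v = iter n (mv h) v.
Proof. by elim: n => //= n ->. Qed.
Lemma mpow_e X (h : morph X X) n e : me (mpow h n) e = iter n (me h) e.
Proof. by elim: n => //= n ->. Qed.

Lemma core_bij X (h : morph X X) : pruned X -> bijective (mv h) /\ bijective (me h).
Proof.
move=> pr.
pose F (s : (V X + E X)%type) := match s with inl v => inl (mv h v) | inr e => inr (me h e) end.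
have Fv n v : iter n F (inl v) = inl (iter n (mv h) v) by elim: n => //= n ->.
have Fe n e : iter n F (inr e) = inr (iter n (me h) e) by elim: n => //= n ->.
have [k [k0 Hk]] := iter_idem F.
have Hv v : iter (k + k) (mv h) v = iter k (mv h) v.
  by have := Hk (inl v); rewrite !Fv => -[].
have He e : iter (k + k) (me h) e = iter k (me h) e.
  by have := Hk (inr e); rewrite !Fe => -[].
have [idv ide] : (forall v, mv (mpow h k) v = v) /\ (forall e, me (mpow h k) e = e).
  apply: pr; split=> [v|e]; rewrite ?mpow_v ?mpow_e -iterD; [exact: Hv | exact: He].
move: idv ide; rewrite /= => idv ide.
case: k k0 Hk Hv He idv ide => // k _ _ _ _ idv ide.
split.
- exists (iter k (mv h)) => v.
  + by have := idv v; rewrite mpow_v -iterSr.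
  + by have := idv v; rewrite mpow_v.
- exists (iter k (me h)) => e.
  + by have := ide e; rewrite mpow_e -iterSr.
  + by have := ide e; rewrite mpow_e.
Qed.

Lemma bij_pruned X : (forall h : morph X X, bijective (mv h) /\ bijective (me h)) -> pruned X.
Proof.
move=> H r [rv re]; have [bv be] := H r.
split=> [v|e]; [apply: (bij_inj bv) | apply: (bij_inj be)]; by [rewrite rv | rewrite re].
Qed.

Lemma inv_morph X Y (f : morph X Y) : bijective (mv f) -> bijective (me f) ->
  exists g : morph Y X, [/\ cancel (mv f) (mv g), cancel (mv g) (mv f),
                            cancel (me f) (me g) & cancel (me g) (me f)].
Proof.
case=> gv c1 c2 [ge d1 d2].
have hs : forall e, src (ge e) = gv (src e).
  by move=> e; apply: (can_inj c1); rewrite -m_src c2 d2.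
have ht : forall e, tgt (ge e) = gv (tgt e).
  by move=> e; apply: (can_inj c1); rewrite -m_tgt c2 d2.
have hl : forall e, lab (ge e) = lab e.
  by move=> e; rewrite -{2}(d2 e) m_lab.
have hst : gv (st Y) = st X by rewrite -(m_st f) c1.
have hen : gv (en Y) = en X by rewrite -(m_en f) c1.
by exists (@Morph _ Y X gv ge hs ht hl hst hen).
Qed.

Lemma iso_homeq X Y : iso X Y -> homeq X Y.
Proof.
move=> [f [bv be]]; have [g _] := inv_morph bv be.
by split; [exists f | exists g].
Qed.

Lemma iso_refl X : iso X X.
Proof. by exists (mid X); split; exists id. Qed.

Lemma iso_sym X Y : iso X Y -> iso Y X.
Proof.
move=> [f [bv be]]; have [g [c1 c2 c3 c4]] := inv_morph bv be.
by exists g; split; [exists (mv f) | exists (me f)].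
Qed.

Lemma iso_trans X Y Z : iso X Y -> iso Y Z -> iso X Z.
Proof.
move=> [f [bv be]] [g [bv' be']]; exists (mcomp g f); split; exact: bij_comp.
Qed.

Lemma pruned_iso X Y : pruned X -> iso X Y -> pruned Y.
Proof.
move=> pr [f [bv be]]; have [g [c1 c2 c3 c4]] := inv_morph bv be.
apply: bij_pruned => h.
have [b1 b2] := core_bij (mcomp g (mcomp h f)) pr.
have bgv : bijective (mv g) by exists (mv f).
have bge : bijective (me g) by exists (me f).
split.
- apply: (@eq_bij _ _ (fun v => mv f (mv (mcomp g (mcomp h f)) (mv g v)))).
    by apply: (bij_comp (f:=mv f)) => //; apply: (bij_comp (f:=mv (mcomp g (mcomp h f)))).
  by move=> v /=; rewrite c2 c2.
- apply: (@eq_bij _ _ (fun v => me f (me (mcomp g (mcomp h f)) (me g v)))).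
    by apply: (bij_comp (f:=me f)) => //; apply: (bij_comp (f:=me (mcomp g (mcomp h f)))).
  by move=> v /=; rewrite c4 c4.
Qed.

Lemma homeq_iso X Y : pruned X -> pruned Y -> homeq X Y -> iso X Y.
Proof.
move=> pX pY [[f _] [g _]]; exists f.
have [[a a1 a2] [a' a1' a2']] := core_bij (mcomp g f) pX.
have [[b b1 b2] [b' b1' b2']] := core_bij (mcomp f g) pY.
simpl in *.
split.
- exists (fun y => mv g (b y)) => x; last by apply: b2.
  apply: (can_inj a1); congr (mv g _).
  by apply: b2.
- exists (fun y => me g (b' y)) => x; last by apply: b2'.
  apply: (can_inj a1'); congr (me g _).
  by apply: b2'.
Qed.

Lemma prunes_homeq W Z : prunes W Z -> homeq W Z /\ pruned Z.
Proof.
move=> [r [[rv re] [pim isoZ]]]; split; last exact: pruned_iso isoZ.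
apply: homeq_trans (iso_homeq isoZ); split.
- have hs : forall e, src (g:=Defs.image r) (exist _ (me r e) (introT eqP (re e)))
     = exist _ (mv r (src e)) (introT eqP (rv (src e))).
    by move=> e; apply: val_inj; rewrite /= m_src.
  have ht : forall e, tgt (g:=Defs.image r) (exist _ (me r e) (introT eqP (re e)))
     = exist _ (mv r (tgt e)) (introT eqP (rv (tgt e))).
    by move=> e; apply: val_inj; rewrite /= m_tgt.
  have hl : forall e, lab (g:=Defs.image r) (exist _ (me r e) (introT eqP (re e))) = lab e.
    by move=> e; rewrite /= m_lab.
  have hst : (exist _ (mv r (st W)) (introT eqP (rv (st W))) : V (Defs.image r)) = st (Defs.image r).
    by apply: val_inj; rewrite /= m_st.
  have hen : (exist _ (mv r (en W)) (introT eqP (rv (en W))) : V (Defs.image r)) = en (Defs.image r).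
    by apply: val_inj; rewrite /= m_en.
  by exists (@Morph _ W (Defs.image r)
    (fun v => exist (fun x : V W => mv r x == x) (mv r v) (introT eqP (rv v)))
    (fun e => exist (fun x : E W => me r x == x) (me r e) (introT eqP (re e)))
    hs ht hl hst hen).
- by exists (@Morph _ (Defs.image r) W val val (fun _ => erefl) (fun _ => erefl)
     (fun _ => erefl) erefl erefl).
Qed.



Lemma inj2_st X Y : inj2 X (st Y) = inl (en X).
Proof. by rewrite /inj2 insubF // eqxx. Qed.
Lemma inj2_ne X Y (v : V Y) (hv : v != st Y) : inj2 X v = inr (exist _ v hv).
Proof. by rewrite /inj2 (insubT (fun v => v != st Y) hv). Qed.

Definition pv X X' Y Y' (f : morph X X') (g : morph Y Y') (v : V (prodT X Y)) : V (prodT X' Y') :=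
  match v with inl x => inl (mv f x) | inr w => inj2 X' (mv g (val w)) end.
Lemma pv_inj2 X X' Y Y' (f : morph X X') (g : morph Y Y') v :
  pv f g (inj2 X v) = inj2 X' (mv g v).
Proof.
case: (eqVneq v (st Y)) => [->|hv]; first by rewrite !inj2_st /= m_en m_st inj2_st.
by rewrite (inj2_ne X hv).
Qed.

Lemma hom_prod X X' Y Y' : hom X X' -> hom Y Y' -> hom (prodT X Y) (prodT X' Y').
Proof.
move=> [f _] [g _].
pose pe (e : E (prodT X Y)) : E (prodT X' Y') :=
  match e with inl e => inl (me f e) | inr e => inr (me g e) end.
have hs : forall e, src (pe e) = pv f g (src e).
  by case=> e /=; rewrite ?pv_inj2 m_src.
have ht : forall e, tgt (pe e) = pv f g (tgt e).
  by case=> e /=; rewrite ?pv_inj2 m_tgt.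
have hl : forall e, lab (pe e) = lab e by case=> e /=; rewrite m_lab.
have hst : pv f g (st (prodT X Y)) = st (prodT X' Y') by rewrite /= m_st.
have hen : pv f g (en (prodT X Y)) = en (prodT X' Y') by rewrite /= pv_inj2 m_en.
by exists (Morph hs ht hl hst hen).
Qed.

Lemma hom_plus X Y : hom X Y -> hom (plusT X) (plusT Y).
Proof.
move=> [f _].
by exists (@Morph _ (plusT X) (plusT Y) (mv f) (me f) (m_src f) (m_tgt f) (m_lab f) (m_st f) (m_st f)).
Qed.
Lemma hom_star X Y : hom X Y -> hom (starT X) (starT Y).
Proof.
move=> [f _].
by exists (@Morph _ (starT X) (starT Y) (mv f) (me f) (m_src f) (m_tgt f) (m_lab f) (m_en f) (m_en f)).
Qed.

Section Assoc.
Variables A B C : graph.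
Definition av (v : V (prodT (prodT A B) C)) : V (prodT A (prodT B C)) :=
  match v with
  | inl (inl a) => inl a
  | inl (inr b) => @inj2 _ A (prodT B C) (inl (val b))
  | inr c => @inj2 _ A (prodT B C) (inj2 B (val c))
  end.
Arguments av : simpl never.
Lemma av1 v : av (inl (inj2 A v)) = @inj2 _ A (prodT B C) (inl v).
Proof.
case: (eqVneq v (st B)) => [->|hv]; first by rewrite inj2_st /= (inj2_st A (prodT B C)).
by rewrite (inj2_ne A hv).
Qed.
Lemma av2 v : av (inj2 (prodT A B) v) = @inj2 _ A (prodT B C) (inj2 B v).
Proof.
case: (eqVneq v (st C)) => [->|hv]; first by rewrite !inj2_st; apply: av1.
by rewrite (inj2_ne _ hv).
Qed.
Lemma hom_assoc1 : hom (prodT (prodT A B) C) (prodT A (prodT B C)).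
Proof.
pose pe (e : E (prodT (prodT A B) C)) : E (prodT A (prodT B C)) :=
  match e with inl (inl e) => inl e | inl (inr e) => inr (inl e) | inr e => inr (inr e) end.
have hs : forall e, src (pe e) = av (src e).
  by case=> [[]|] e /=; rewrite ?av1 ?av2.
have ht : forall e, tgt (pe e) = av (tgt e).
  by case=> [[]|] e /=; rewrite ?av1 ?av2.
have hl : forall e, lab (pe e) = lab e by case=> [[]|] e.
have hst : av (st (prodT (prodT A B) C)) = st (prodT A (prodT B C)) by [].
have hen : av (en (prodT (prodT A B) C)) = en (prodT A (prodT B C)) by rewrite /= av2.
by exists (Morph hs ht hl hst hen).
Qed.

Definition gam (x : V (prodT B C)) : V (prodT (prodT A B) C) :=
  match x with inl b => inl (inj2 A b) | inr c => inj2 (prodT A B) (val c) end.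
Definition bv (v : V (prodT A (prodT B C))) : V (prodT (prodT A B) C) :=
  match v with inl a => inl (inl a) | inr w => gam (val w) end.
Arguments bv : simpl never.
Arguments gam : simpl never.
Lemma bv1 x : bv (inj2 A x) = gam x.
Proof.
case: (eqVneq x (st (prodT B C))) => [->|hv]; first by rewrite inj2_st /bv /gam /= inj2_st.
by rewrite (inj2_ne A hv) /bv.
Qed.
Lemma gam2 v : gam (inj2 B v) = inj2 (prodT A B) v.
Proof.
case: (eqVneq v (st C)) => [->|hv]; first by rewrite !inj2_st /gam.
by rewrite (inj2_ne B hv).
Qed.
Lemma hom_assoc2 : hom (prodT A (prodT B C)) (prodT (prodT A B) C).
Proof.
pose pe (e : E (prodT A (prodT B C))) : E (prodT (prodT A B) C) :=
  match e with inl e => inl (inl e) | inr (inl e) => inl (inr e) | inr (inr e) => inr e end.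
have hs : forall e, src (pe e) = bv (src e).
  by case=> [|[]] e /=; rewrite ?bv1 ?gam2.
have ht : forall e, tgt (pe e) = bv (tgt e).
  by case=> [|[]] e /=; rewrite ?bv1 ?gam2.
have hl : forall e, lab (pe e) = lab e by case=> [|[]] e.
have hst : bv (st (prodT A (prodT B C))) = st (prodT (prodT A B) C) by [].
have hen : bv (en (prodT A (prodT B C))) = en (prodT (prodT A B) C) by rewrite /= bv1 gam2.
by exists (Morph hs ht hl hst hen).
Qed.
End Assoc.

Lemma hom_glue Z Y T (fv : V Z -> V T) (fe : E Z -> E T) (gv : V Y -> V T) (ge : E Y -> E T) :
  (forall e, src (fe e) = fv (src e)) -> (forall e, tgt (fe e) = fv (tgt e)) ->
  (forall e, lab (fe e) = lab e) ->
  (forall e, src (ge e) = gv (src e)) -> (forall e, tgt (ge e) = gv (tgt e)) ->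
  (forall e, lab (ge e) = lab e) ->
  fv (en Z) = gv (st Y) -> fv (st Z) = st T -> gv (en Y) = en T ->
  hom (prodT Z Y) T.
Proof.
move=> fs ft fl gs gt gl hj hst hen.
pose mv0 (v : V (prodT Z Y)) : V T := match v with inl z => fv z | inr w => gv (val w) end.
have key : forall v, mv0 (inj2 Z v) = gv v.
  move=> v; case: (eqVneq v (st Y)) => [->|hv]; first by rewrite inj2_st.
  by rewrite (inj2_ne Z hv).
pose me0 (e : E (prodT Z Y)) : E T := match e with inl e => fe e | inr e => ge e end.
have hs : forall e, src (me0 e) = mv0 (src e) by case=> e /=; rewrite ?key.
have ht : forall e, tgt (me0 e) = mv0 (tgt e) by case=> e /=; rewrite ?key.
have hl : forall e, lab (me0 e) = lab e by case=> e /=.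
have hs0 : mv0 (st (prodT Z Y)) = st T by [].
have he0 : mv0 (en (prodT Z Y)) = en T by rewrite /= key.
by exists (Morph hs ht hl hs0 he0).
Qed.

Lemma hom_inl X Y : en Y = st Y -> hom X (prodT X Y).
Proof.
move=> h.
have hen : (inl (en X) : V (prodT X Y)) = en (prodT X Y) by rewrite /= h inj2_st.
by exists (@Morph _ X (prodT X Y) inl inl (fun _ => erefl) (fun _ => erefl) (fun _ => erefl) erefl hen).
Qed.

Lemma hom_inr Z Y : st Z = en Z -> hom Y (prodT Z Y).
Proof.
move=> h.
have hst : inj2 Z (st Y) = st (prodT Z Y) by rewrite inj2_st /= h.
by exists (@Morph _ Y (prodT Z Y) (@inj2 _ Z Y) inr (fun _ => erefl) (fun _ => erefl) (fun _ => erefl) hst erefl).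
Qed.

Definition Igraph : graph :=
  @Graph Sigma unit void (fun e => match e with end) (fun e => match e with end)
    (fun e => match e with end) tt tt.

Lemma homeq_unitl X : homeq (prodT Igraph X) X.
Proof.
split; last exact: hom_inr.
apply: (@hom_glue Igraph X X (fun _ => st X) (fun e => match e with end) id id) => //; by case.
Qed.

Lemma homeq_unitr X : homeq (prodT X Igraph) X.
Proof.
split; last exact: hom_inl.
apply: (@hom_glue X Igraph X id id (fun _ => en X) (fun e => match e with end)) => //; by case.
Qed.

Lemma homeq_plus_absorb X : homeq (prodT (plusT X) X) X.
Proof.
split; last exact: (@hom_inr (plusT X) X).
exact: (@hom_glue (plusT X) X X id id id id).
Qed.

Lemma homeq_star_absorb X : homeq (prodT X (starT X)) X.
Proof.
split; last exact: (@hom_inl X (starT X)).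
exact: (@hom_glue X (starT X) X id id id id).
Qed.

Lemma hom_swap X Y : st X = en X -> st Y = en Y -> hom (prodT X Y) (prodT Y X).
Proof.
move=> hX hY.
apply: (@hom_glue X Y (prodT Y X) (@inj2 _ Y X) inr inl inl) => //=.
- by rewrite -hX !inj2_st hY.
- by rewrite inj2_st hY.
- by rewrite -hX inj2_st.
Qed.


Inductive dpn X : V X -> V X -> nat -> Prop :=
| dpn0 v : dpn v v 0
| dpnS e w n : dpn (tgt e) w n -> dpn (src e) w n.+1.

Lemma dpn_cat X (u v w : V X) m n : dpn u v m -> dpn v w n -> dpn u w (m + n).
Proof. by elim=> //= e v' k _ IH /IH; apply: dpnS. Qed.

Lemma dpn_snoc X (u : V X) e n : dpn u (src e) n -> dpn u (tgt e) n.+1.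
Proof. by move=> H; rewrite -addn1; apply: dpn_cat H (dpnS (dpn0 _)). Qed.

Lemma dpn0_eq X (u w : V X) : dpn u w 0 -> u = w.
Proof. by move=> H; inversion H. Qed.

Lemma dpn_last X (u w : V X) n : dpn u w n.+1 -> exists e, tgt e = w /\ dpn u (src e) n.
Proof.
move=> H; have: forall k, dpn u w k -> forall n, k = n.+1 -> exists e, tgt e = w /\ dpn u (src e) n.
  move=> k {H}; elim=> // e w' k' H IH n0 [<-].
  case: k' H IH => [|k'] H IH.
    by exists e; split; [exact: dpn0_eq H | exact: dpn0].
  have [e' [h1 h2]] := IH k' erefl.
  by exists e'; split => //; apply: dpnS.
by move/(_ _ H n erefl).
Qed.

Lemma dpath_dpn X (u w : V X) : dpath u w -> exists n, dpn u w n.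
Proof. elim=> [v|e w' _ [n H]]; [by exists 0; apply: dpn0 | by exists n.+1; apply: dpnS]. Qed.

Section Map.
Variables (X Y : graph) (fv : V X -> V Y) (fe : E X -> E Y).
Hypotheses (hs : forall e, src (fe e) = fv (src e)) (ht : forall e, tgt (fe e) = fv (tgt e)).
Lemma map_dpn u w n : dpn u w n -> dpn (fv u) (fv w) n.
Proof. elim=> [v|e w' k _ IH]; first exact: dpn0. by rewrite -hs; apply: dpnS; rewrite ht. Qed.
Lemma map_uconn u w : uconn u w -> uconn (fv u) (fv w).
Proof.
elim=> [v|e w' _ IH|e w' _ IH]; first exact: uconn_refl.
- by rewrite -hs; apply: uconn_fwd; rewrite ht.
- by rewrite -ht; apply: uconn_bwd; rewrite hs.
Qed.
End Map.

Lemma mdpn X Y (f : morph X Y) u w n : dpn u w n -> dpn (mv f u) (mv f w) n.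
Proof. exact: (@map_dpn X Y (mv f) (me f) (m_src f) (m_tgt f)). Qed.

Lemma uconn_trans X (u v w : V X) : uconn u v -> uconn v w -> uconn u w.
Proof.
elim=> // e w' _ IH /IH H; [exact: uconn_fwd | exact: uconn_bwd].
Qed.
Lemma uconn_sym X (u w : V X) : uconn u w -> uconn w u.
Proof.
elim=> [v|e w' _ IH|e w' _ IH]; first exact: uconn_refl.
- by apply: uconn_trans IH _; apply: uconn_bwd; apply: uconn_refl.
- by apply: uconn_trans IH _; apply: uconn_fwd; apply: uconn_refl.
Qed.

Section Tree.
Variable T : graph.
Hypothesis conn : forall u v : V T, uconn u v.
Hypothesis card : #|V T| = #|E T|.+1.
Local Notation r := (st T).

Definition incident (e : E T) (v : V T) := (src e == v) || (tgt e == v).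
Definition other (e : E T) (v : V T) := if src e == v then tgt e else src e.

Fixpoint R n : {set V T} :=
  if n is n'.+1 then R n' :|: [set v | [exists e, incident e v && (other e v \in R n')]]
  else [set r].

Lemma R_S n : R n \subset R n.+1.
Proof. by apply/subsetP => v /= H; rewrite inE H. Qed.

Lemma R_mono n m : n <= m -> R n \subset R m.
Proof.
move=> le; rewrite -(subnK le); elim: (m - n) => // k IH.
by apply: subset_trans IH (R_S _).
Qed.

Lemma R_step e v n : incident e v -> other e v \in R n -> v \in R n.+1.
Proof. by move=> h1 h2 /=; rewrite !inE; apply/orP; right; apply/existsP; exists e; rewrite h1. Qed.

Lemma R_reach v : exists n, v \in R n.
Proof.
have: forall u w, uconn u w -> w = r -> exists n, u \in R n.
  move=> u w; elim=> [v' ->|e w' _ IH /IH [n H]|e w' _ IH /IH [n H]].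
  - by exists 0; rewrite /= inE.
  - by exists n.+1; apply: (R_step (e := e)); rewrite /incident /other ?eqxx.
  - exists n.+1; apply: (R_step (e := e)); first by rewrite /incident eqxx orbT.
    by rewrite /other; case: ifP => [/eqP <-|_] //.
by move/(_ v r (conn v r) erefl).
Qed.

Definition d v := ex_minn (@R_reach v).
Lemma d_in v : v \in R (d v).
Proof. by rewrite /d; case: ex_minnP. Qed.
Lemma d_min v n : v \in R n -> d v <= n.
Proof. by rewrite /d; case: ex_minnP => m _ H /H. Qed.
Lemma d_r : d r = 0.
Proof. by apply/eqP; rewrite -leqn0; apply: d_min; rewrite /= inE. Qed.

Lemma d_other v : v != r -> exists e, incident e v && ((d (other e v)).+1 == d v).
Proof.
move=> vr.
have := d_in v; case E : (d v) => [|n]; first by rewrite /= inE (negbTE vr).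
rewrite /= inE => /orP [H|]; first by have := d_min H; rewrite E ltnn.
rewrite inE => /existsP [e /andP [inc H]]; exists e; rewrite inc /=.
have H1 := d_min H.
have : d v <= (d (other e v)).+1 by apply: d_min; apply: (R_step inc); exact: d_in.
by rewrite E eqSS eqn_leq H1 ltnS => ->.
Qed.

Definition pe v := [pick e | incident e v && ((d (other e v)).+1 == d v)].

Lemma pe_spec v e : pe v = Some e -> incident e v /\ (d (other e v)).+1 = d v.
Proof. by rewrite /pe; case: pickP => // e' /andP [h1 /eqP h2] [<-]. Qed.

Lemma pe_some v : v != r -> exists e, pe v = Some e.
Proof.
move=> vr; rewrite /pe; case: pickP => [e _|H]; first by exists e.
by have [e He] := d_other vr; move: (H e); rewrite He.
Qed.

Lemma pe_r : pe r = None.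
Proof. by case E: (pe r) => [e|] //; have [_] := pe_spec E; rewrite d_r. Qed.

Lemma other_inc e a b : a != b -> incident e a -> incident e b -> other e a = b.
Proof.
rewrite /incident /other => ab.
case/orP => /eqP ha; case/orP => /eqP hb; subst.
- by rewrite eqxx in ab.
- by rewrite eqxx.
- by rewrite eq_sym (negbTE ab).
- by rewrite eqxx in ab.
Qed.

Lemma pe_inj v w e : pe v = Some e -> pe w = Some e -> v = w.
Proof.
move=> /pe_spec [iv dv] /pe_spec [iw dw].
apply/eqP; apply/negP => /negP vw.
rewrite (other_inc vw iv iw) in dv.
rewrite (other_inc _ iw iv) in dw; last by rewrite eq_sym.
lia.
Qed.
Lemma pe_surj e : exists v, pe v = Some e.
Proof.
have inj : {in [set~ r] &, injective pe}.
  move=> v w; rewrite !inE => vr wr.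
  have [e1 h1] := pe_some vr; have [e2 h2] := pe_some wr.
  by rewrite h1 h2 => -[E12]; subst; apply: (pe_inj h1 h2).
have c1 : #|pe @: [set~ r]| = #|E T| by rewrite (card_in_imset inj) cardsC1 card.
have c2 : #|(@Some (E T)) @: [set: E T]| = #|E T|.
  by rewrite card_imset ?cardsT //; move=> x y [].
have sub : pe @: [set~ r] \subset (@Some (E T)) @: [set: E T].
  apply/subsetP => x /imsetP [v]; rewrite !inE => vr ->.
  by have [e' ->] := pe_some vr; apply/imsetP; exists e'; rewrite ?inE.
have : pe @: [set~ r] == (@Some (E T)) @: [set: E T] by rewrite eqEcard sub c1 c2 leqnn.
move/eqP => H.
have : Some e \in pe @: [set~ r] by rewrite H; apply/imsetP; exists e; rewrite ?inE.
by case/imsetP => v _ ->; exists v.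
Qed.

Lemma claim n : forall e, dpn r (src e) n -> d (tgt e) = n.+1 /\ pe (tgt e) = Some e.
Proof.
elim: n => [|n IH] e H.
- move/dpn0_eq: H => H.
  have [v hv] := pe_surj e; have [inc dv] := pe_spec hv.
  have vr : v != r by apply/eqP => vr; rewrite vr pe_r in hv.
  move: inc; rewrite /incident => /orP [] /eqP hs.
  + by rewrite -hs -H eqxx in vr.
  + move: dv; rewrite /other; case: ifP => [/eqP se|_].
    * by rewrite -se -H eqxx in vr.
    * by rewrite -H d_r => h; split; [rewrite hs -h | rewrite hs].
- have [e' [te' de']] := dpn_last H.
  have [d1 p1] := IH _ de'; rewrite te' in d1 p1.
  have [v hv] := pe_surj e; have [inc dv] := pe_spec hv.
  move: inc; rewrite /incident => /orP [] /eqP hs.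
  +
    subst v; rewrite p1 in hv; case: hv => ee; subst e'.
    exfalso; move: dv; rewrite /other eqxx -te' => h.
    by move: d1; rewrite -te' -h; lia.
  + subst v; move: dv; rewrite /other.
    case: ifP => [/eqP se|_].
    * by rewrite -se d1; lia.
    * by rewrite d1 => <-.
Qed.

Lemma depth v n : dpn r v n -> d v = n.
Proof.
case: n => [/dpn0_eq <-|n]; first exact: d_r.
by case/dpn_last => e [<- H]; case: (claim H).
Qed.

Definition anc v := if pe v is Some e then other e v else v.

Lemma anc_iter u w k m : dpn r u k -> dpn u w m -> iter m anc w = u.
Proof.
move=> H1 H2; elim: H2 k H1 => [v|e w' m' H IH] k H1 //.
have H1' := dpn_snoc H1.
have [dt p] := claim H1.
have ds := depth H1.
rewrite iterS (IH _ H1') /anc p /other.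
by case: ifP => [/eqP se|] //; move: dt; rewrite -se ds; lia.
Qed.

Lemma dpn_unique u u' w k m m' :
  dpn r u k -> dpn u w m -> dpn r u' k -> dpn u' w m' -> u = u'.
Proof.
move=> H1 H2 H1' H2'.
have e1 := depth (dpn_cat H1 H2); have e2 := depth (dpn_cat H1' H2').
have mm : m = m' by lia.
by rewrite -(anc_iter H1 H2) -(anc_iter H1' H2') mm.
Qed.
End Tree.


Lemma dpn_dpath X (u w : V X) n : dpn u w n -> dpath u w.
Proof. elim=> [v|e w' k _ IH]; [exact: dpath_refl | exact: dpath_step]. Qed.

Lemma tree_depth X (v : V X) n n' : is_tree X -> dpn (st X) v n -> dpn (st X) v n' -> n = n'.
Proof. by move=> [c [k _]] H1 H2; rewrite -(depth c k H1) -(depth c k H2). Qed.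

Lemma tree_unique X (u u' w : V X) k m m' : is_tree X ->
  dpn (st X) u k -> dpn u w m -> dpn (st X) u' k -> dpn u' w m' -> u = u'.
Proof. by move=> [c [kk _]]; apply: dpn_unique. Qed.

Lemma tree_I : is_tree Igraph.
Proof.
split; first by case; case; exact: uconn_refl.
split; last exact: dpath_refl.
by rewrite /= card_unit card_void.
Qed.

Lemma dpn_inl U X (u w : V U) n : dpn u w n -> dpn (inl u : V (prodT U X)) (inl w) n.
Proof. exact: (@map_dpn U (prodT U X) inl inl (fun _ => erefl) (fun _ => erefl)). Qed.
Lemma dpn_inj2 U X (u w : V X) n : dpn u w n -> @dpn (prodT U X) (inj2 U u) (inj2 U w) n.
Proof. exact: (@map_dpn X (prodT U X) (@inj2 _ U X) inr (fun _ => erefl) (fun _ => erefl)). Qed.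

Lemma tree_prod U X : is_tree U -> is_tree X -> is_tree (prodT U X).
Proof.
move=> [cU [kU dU]] [cX [kX dX]].
have hl : forall u w : V U, uconn (inl u : V (prodT U X)) (inl w).
  by move=> u w; exact: (@map_uconn U (prodT U X) inl inl (fun _ => erefl) (fun _ => erefl) _ _ (cU u w)).
have hr : forall u w : V X, @uconn _ (prodT U X) (inj2 U u) (inj2 U w).
  by move=> u w; exact: (@map_uconn X (prodT U X) (@inj2 _ U X) inr (fun _ => erefl) (fun _ => erefl) _ _ (cX u w)).
have toR : forall z : V (prodT U X), uconn z (inl (st U)).
  case=> [u|w]; first exact: hl.
  have -> : (inr w : V (prodT U X)) = inj2 U (val w).
    by case: w => w hw; rewrite (inj2_ne U hw).
  apply: uconn_trans (hr _ (st X)) _; rewrite inj2_st; exact: hl.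
split; first by move=> a b; apply: uconn_trans (toR a) (uconn_sym (toR b)).
split.
  have c1 : #|{: {v : V X | v != st X}}| = #|V X|.-1.
    by rewrite card_sig -(cardC1 (st X)); apply: eq_card => y; rewrite !inE.
  rewrite /= card_sum card_sum kU c1 kX /=; lia.
have [a hU] := dpath_dpn dU; have [b hX] := dpath_dpn dX.
apply: (@dpn_dpath _ _ _ (a + b)); apply: dpn_cat (dpn_inl X hU) _.
by rewrite -(inj2_st U X); apply: dpn_inj2.
Qed.

Lemma idem_st_en X : is_tree X -> hom (prodT X X) X -> st X = en X.
Proof.
move=> tX [f _].
have [b hX] := dpath_dpn tX.2.2.
have h2 : dpn (st (prodT X X)) (en (prodT X X)) (b + b).
  apply: dpn_cat (dpn_inl X hX) _.
  by rewrite -(inj2_st X X); apply: dpn_inj2.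
have := mdpn f h2; rewrite m_st m_en => h3.
have bb := tree_depth tX hX h3.
have b0 : b = 0 by lia.
by rewrite b0 in hX; apply: dpn0_eq.
Qed.

Lemma junction_plus U V0 X (f : morph (prodT U X) (prodT V0 X)) :
  is_tree U -> is_tree V0 -> is_tree X -> mv f (inl (en U)) = inl (en V0).
Proof.
move=> tU tV tX.
have [a hU] := dpath_dpn tU.2.2; have [a' hV] := dpath_dpn tV.2.2.
have [b hX] := dpath_dpn tX.2.2.
have hU1 : dpn (st (prodT U X)) (inl (en U)) a := dpn_inl X hU.
have hU2 : dpn (inl (en U) : V (prodT U X)) (en (prodT U X)) b.
  by rewrite -(inj2_st U X); apply: dpn_inj2.
have hV1 : dpn (st (prodT V0 X)) (inl (en V0)) a' := dpn_inl X hV.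
have hV2 : dpn (inl (en V0) : V (prodT V0 X)) (en (prodT V0 X)) b.
  by rewrite -(inj2_st V0 X); apply: dpn_inj2.
have tP := tree_prod tV tX.
have f1 := mdpn f hU1; have f2 := mdpn f hU2; rewrite m_st in f1; rewrite m_en in f2.
have aa : a + b = a' + b := tree_depth tP (dpn_cat f1 f2) (dpn_cat hV1 hV2).
have ea : a = a' by lia.
rewrite -ea in hV1.
exact: (tree_unique tP f1 f2 hV1 hV2).
Qed.

Lemma hom_Rplus U V0 X : is_tree U -> is_tree V0 -> is_tree X ->
  hom (prodT U X) (prodT V0 X) -> hom (prodT U (plusT X)) (prodT V0 (plusT X)).
Proof.
move=> tU tV tX [f _].
have J := junction_plus f tU tV tX.
have hen : mv f (en (prodT U (plusT X))) = en (prodT V0 (plusT X)).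
  change (mv f (@inj2 _ U (plusT X) (st (plusT X))) = @inj2 _ V0 (plusT X) (st (plusT X))).
  by rewrite !inj2_st.
by exists (@Morph _ (prodT U (plusT X)) (prodT V0 (plusT X)) (mv f) (me f)
  (m_src f) (m_tgt f) (m_lab f) (m_st f) hen).
Qed.

Lemma junction_star U V0 X (f : morph (prodT X U) (prodT X V0)) :
  is_tree U -> is_tree V0 -> is_tree X -> mv f (inl (en X)) = inl (en X).
Proof.
move=> tU tV tX.
have [a hU] := dpath_dpn tU.2.2; have [a' hV] := dpath_dpn tV.2.2.
have [b hX] := dpath_dpn tX.2.2.
have hU1 : dpn (st (prodT X U)) (inl (en X)) b := dpn_inl U hX.
have hU2 : dpn (inl (en X) : V (prodT X U)) (en (prodT X U)) a.
  by rewrite -(inj2_st X U); apply: dpn_inj2.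
have hV1 : dpn (st (prodT X V0)) (inl (en X)) b := dpn_inl V0 hX.
have hV2 : dpn (inl (en X) : V (prodT X V0)) (en (prodT X V0)) a'.
  by rewrite -(inj2_st X V0); apply: dpn_inj2.
have tP := tree_prod tX tV.
have f1 := mdpn f hU1; have f2 := mdpn f hU2; rewrite m_st in f1; rewrite m_en in f2.
exact: (tree_unique tP f1 f2 hV1 hV2).
Qed.

Lemma hom_Lstar U V0 X : is_tree U -> is_tree V0 -> is_tree X ->
  hom (prodT X U) (prodT X V0) -> hom (prodT (starT X) U) (prodT (starT X) V0).
Proof.
move=> tU tV tX [f _].
have J := junction_star f tU tV tX.
by exists (@Morph _ (prodT (starT X) U) (prodT (starT X) V0) (mv f) (me f)
  (m_src f) (m_tgt f) (m_lab f) J (m_en f)).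
Qed.

Lemma homeq_prod A A' B B' : homeq A A' -> homeq B B' -> homeq (prodT A B) (prodT A' B').
Proof. by move=> [h1 h2] [h3 h4]; split; apply: hom_prod. Qed.
Lemma homeq_assoc A B C : homeq (prodT (prodT A B) C) (prodT A (prodT B C)).
Proof. by split; [apply: hom_assoc1 | apply: hom_assoc2]. Qed.

Lemma class_eq X Y : iso X Y -> isoclass X = isoclass Y.
Proof.
move=> h; apply: functional_extensionality => Z; apply: propositional_extensionality.
by split => H; [apply: iso_trans (iso_sym h) H | apply: iso_trans h H].
Qed.
Lemma class_iso X Y : isoclass X = isoclass Y -> iso X Y.
Proof. move=> E; have H : isoclass Y Y by apply: iso_refl. by rewrite -E in H. Qed.
Lemma class_eqh X Y : pruned X -> pruned Y -> homeq X Y -> isoclass X = isoclass Y.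
Proof. by move=> pX pY h; apply: class_eq; apply: homeq_iso. Qed.
Lemma class_homeq X Y : isoclass X = isoclass Y -> homeq X Y.
Proof. by move/class_iso/iso_homeq. Qed.

Lemma Kmul X Y W : tmul (isoclass X) (isoclass Y) = isoclass W -> homeq W (prodT X Y).
Proof.
move=> E; have : tmul (isoclass X) (isoclass Y) W by rewrite E; apply: iso_refl.
case=> X' [Y' [h1 [h2 hp]]]; have [hq _] := prunes_homeq hp.
apply: homeq_sym; apply: homeq_trans hq.
by apply: homeq_prod; apply: iso_homeq.
Qed.
Lemma Kplus X W : tplus (isoclass X) = isoclass W -> homeq W (plusT X).
Proof.
move=> E; have : tplus (isoclass X) W by rewrite E; apply: iso_refl.
case=> X' [h1 hp]; have [hq _] := prunes_homeq hp.
apply: homeq_sym; apply: homeq_trans hq.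
by have [a b] := iso_homeq h1; split; apply: hom_plus.
Qed.
Lemma Kstar X W : tstar (isoclass X) = isoclass W -> homeq W (starT X).
Proof.
move=> E; have : tstar (isoclass X) W by rewrite E; apply: iso_refl.
case=> X' [h1 hp]; have [hq _] := prunes_homeq hp.
apply: homeq_sym; apply: homeq_trans hq.
by have [a b] := iso_homeq h1; split; apply: hom_star.
Qed.

Section Cls.
Variable S : tclass Sigma -> Prop.
Hypothesis hT1 : forall C, S C -> T1 C.
Hypothesis hmul : forall C D, S C -> S D -> S (tmul C D).

Lemma rep C : S C -> exists X, [/\ is_tree X, pruned X & C = isoclass X].
Proof. by case/hT1 => X [t [p e]]; exists X. Qed.

Lemma mul_rep a b A B : S a -> S b -> a = isoclass A -> b = isoclass B ->
  exists W, [/\ tmul a b = isoclass W, pruned W, is_tree W & homeq W (prodT A B)].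
Proof.
move=> Sa Sb ea eb; have [W [t p e]] := rep (hmul Sa Sb).
by exists W; split => //; apply: Kmul; rewrite -ea -eb.
Qed.

Lemma semigroup : is_subsemigroup S (@tmul Sigma).
Proof.
split=> [a b|a b c Sa Sb Sc]; first exact: hmul.
have [A [tA pA eA]] := rep Sa; have [B [tB pB eB]] := rep Sb; have [C [tC pC eC]] := rep Sc.
have [Wbc [e1 p1 t1 h1]] := mul_rep Sb Sc eB eC.
have [Wab [e2 p2 t2 h2]] := mul_rep Sa Sb eA eB.
have Sbc := hmul Sb Sc; have Sab := hmul Sa Sb.
have [W1 [e3 p3 t3 h3]] := mul_rep Sa Sbc eA e1.
have [W2 [e4 p4 t4 h4]] := mul_rep Sab Sc e2 eC.
rewrite e3 e4; apply: class_eqh => //.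
apply: homeq_trans h3 _; apply: homeq_sym; apply: homeq_trans h4 _.
apply: homeq_trans (homeq_prod h2 (homeq_refl C)) _.
apply: homeq_trans (homeq_assoc A B C) _.
by apply: homeq_prod (homeq_refl A) (homeq_sym h1).
Qed.

Lemma idem_rep e X : S e -> e = isoclass X -> is_tree X -> idem (@tmul Sigma) e -> st X = en X.
Proof.
move=> Se eX tX ide.
have [W [e1 p1 t1 h1]] := mul_rep Se Se eX eX.
rewrite /idem e1 eX in ide.
have [_ h] := homeq_trans (homeq_sym (class_homeq ide)) h1.
exact: idem_st_en.
Qed.

Lemma idems_comm : idems_commute S (@tmul Sigma).
Proof.
move=> e f Se Sf ie iF.
have [X [tX pX eX]] := rep Se; have [Y [tY pY eY]] := rep Sf.
have hX := idem_rep Se eX tX ie; have hY := idem_rep Sf eY tY iF.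
have [W1 [e1 p1 t1 h1]] := mul_rep Se Sf eX eY.
have [W2 [e2 p2 t2 h2]] := mul_rep Sf Se eY eX.
rewrite e1 e2; apply: class_eqh => //.
apply: homeq_trans h1 _; apply: homeq_trans _ (homeq_sym h2).
by split; apply: hom_swap.
Qed.

Lemma lmul_rep x : inS1 S x -> exists G, is_tree G /\ forall c Z, S c -> c = isoclass Z ->
  exists W, [/\ lmul (@tmul Sigma) x c = isoclass W, pruned W & homeq W (prodT G Z)].
Proof.
case: x => [u Su|_] /=.
- have [G [tG pG eG]] := rep Su; exists G; split => // c Z Sc eZ.
  by have [W [e1 p1 t1 h1]] := mul_rep Su Sc eG eZ; exists W.
- exists Igraph; split; first exact: tree_I.
  move=> c Z Sc eZ; have [Z' [t' p' e']] := rep Sc.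
  exists Z'; split => //.
  apply: homeq_trans (homeq_sym (homeq_unitl Z)).
  by rewrite e' in eZ; apply: class_homeq.
Qed.

Lemma rmul_rep x : inS1 S x -> exists G, is_tree G /\ forall c Z, S c -> c = isoclass Z ->
  exists W, [/\ rmul (@tmul Sigma) c x = isoclass W, pruned W & homeq W (prodT Z G)].
Proof.
case: x => [u Su|_] /=.
- have [G [tG pG eG]] := rep Su; exists G; split => // c Z Sc eZ.
  by have [W [e1 p1 t1 h1]] := mul_rep Sc Su eZ eG; exists W.
- exists Igraph; split; first exact: tree_I.
  move=> c Z Sc eZ; have [Z' [t' p' e']] := rep Sc.
  exists Z'; split => //.
  apply: homeq_trans (homeq_sym (homeq_unitr Z)).
  by rewrite e' in eZ; apply: class_homeq.
Qed.

Section Plus.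
Hypothesis hplus : forall C, S C -> S (tplus C).

Lemma plus_ok : plus_is_Rstar_idem S (@tmul Sigma) (@tplus Sigma).
Proof.
move=> a Sa.
have [X [tX pX eX]] := rep Sa.
have Sp := hplus Sa.
have [P [tP pP eP]] := rep Sp.
have hP : homeq P (plusT X) by apply: Kplus; rewrite -eX -eP.
split => //; split.
- have [W [e1 p1 t1 h1]] := mul_rep Sp Sp eP eP.
  rewrite /idem e1 eP; apply: class_eqh => //.
  apply: homeq_trans h1 _; apply: homeq_trans (homeq_prod hP hP) _.
  apply: homeq_trans _ (homeq_sym hP).
  exact: (homeq_plus_absorb (plusT X)).
- move=> x y Sx Sy.
  have [Gx [tGx Hx]] := lmul_rep Sx; have [Gy [tGy Hy]] := lmul_rep Sy.
  have [Wxa [ex1 px1 hx1]] := Hx _ _ Sa eX; have [Wxe [ex2 px2 hx2]] := Hx _ _ Sp eP.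
  have [Wya [ey1 py1 hy1]] := Hy _ _ Sa eX; have [Wye [ey2 py2 hy2]] := Hy _ _ Sp eP.
  rewrite ex1 ex2 ey1 ey2; split => E.
  + apply: class_eqh => //.
    have h : homeq (prodT Gx X) (prodT Gy X).
      by apply: homeq_trans (homeq_sym hx1) _; apply: homeq_trans (class_homeq E) hy1.
    have h' : homeq (prodT Gx (plusT X)) (prodT Gy (plusT X)).
      by case: h => h1 h2; split; apply: hom_Rplus.
    apply: homeq_trans hx2 _; apply: homeq_trans _ (homeq_sym hy2).
    apply: homeq_trans (homeq_prod (homeq_refl Gx) hP) _.
    by apply: homeq_trans h' (homeq_prod (homeq_refl Gy) (homeq_sym hP)).
  + apply: class_eqh => //.
    have h : homeq (prodT Gx P) (prodT Gy P).
      by apply: homeq_trans (homeq_sym hx2) _; apply: homeq_trans (class_homeq E) hy2.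
    have k : forall G, homeq (prodT (prodT G P) X) (prodT G X).
      move=> G; apply: homeq_trans (homeq_assoc G P X) _.
      apply: homeq_prod (homeq_refl G) _.
      apply: homeq_trans (homeq_prod hP (homeq_refl X)) _.
      exact: homeq_plus_absorb.
    apply: homeq_trans hx1 _; apply: homeq_trans _ (homeq_sym hy1).
    apply: homeq_trans (homeq_sym (k Gx)) _; apply: homeq_trans _ (k Gy).
    exact: homeq_prod h (homeq_refl X).
Qed.
End Plus.

Section Star.
Hypothesis hstar : forall C, S C -> S (tstar C).

Lemma star_ok : star_is_Lstar_idem S (@tmul Sigma) (@tstar Sigma).
Proof.
move=> a Sa.
have [X [tX pX eX]] := rep Sa.
have Sp := hstar Sa.
have [P [tP pP eP]] := rep Sp.
have hP : homeq P (starT X) by apply: Kstar; rewrite -eX -eP.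
split => //; split.
- have [W [e1 p1 t1 h1]] := mul_rep Sp Sp eP eP.
  rewrite /idem e1 eP; apply: class_eqh => //.
  apply: homeq_trans h1 _; apply: homeq_trans (homeq_prod hP hP) _.
  apply: homeq_trans _ (homeq_sym hP).
  exact: (homeq_star_absorb (starT X)).
- move=> x y Sx Sy.
  have [Gx [tGx Hx]] := rmul_rep Sx; have [Gy [tGy Hy]] := rmul_rep Sy.
  have [Wxa [ex1 px1 hx1]] := Hx _ _ Sa eX; have [Wxe [ex2 px2 hx2]] := Hx _ _ Sp eP.
  have [Wya [ey1 py1 hy1]] := Hy _ _ Sa eX; have [Wye [ey2 py2 hy2]] := Hy _ _ Sp eP.
  rewrite ex1 ex2 ey1 ey2; split => E.
  + apply: class_eqh => //.
    have h : homeq (prodT X Gx) (prodT X Gy).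
      by apply: homeq_trans (homeq_sym hx1) _; apply: homeq_trans (class_homeq E) hy1.
    have h' : homeq (prodT (starT X) Gx) (prodT (starT X) Gy).
      by case: h => h1 h2; split; apply: hom_Lstar.
    apply: homeq_trans hx2 _; apply: homeq_trans _ (homeq_sym hy2).
    apply: homeq_trans (homeq_prod hP (homeq_refl Gx)) _.
    by apply: homeq_trans h' (homeq_prod (homeq_sym hP) (homeq_refl Gy)).
  + apply: class_eqh => //.
    have h : homeq (prodT P Gx) (prodT P Gy).
      by apply: homeq_trans (homeq_sym hx2) _; apply: homeq_trans (class_homeq E) hy2.
    have k : forall G, homeq (prodT X (prodT P G)) (prodT X G).
      move=> G; apply: homeq_trans (homeq_sym (homeq_assoc X P G)) _.
      apply: homeq_prod _ (homeq_refl G).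
      apply: homeq_trans (homeq_prod (homeq_refl X) hP) _.
      exact: homeq_star_absorb.
    apply: homeq_trans hx1 _; apply: homeq_trans _ (homeq_sym hy1).
    apply: homeq_trans (homeq_sym (k Gx)) _; apply: homeq_trans _ (k Gy).
    exact: homeq_prod (homeq_refl X) h.
Qed.
End Star.
End Cls.

End Th.

Theorem theorem4p10 (Sigma : Type) (S : tclass Sigma -> Prop) :
  (forall C, S C -> T1 C) ->
  ( (forall C D, S C -> S D -> S (tmul C D)) ->
    (forall C, S C -> S (tplus C)) ->
    (forall C, S C -> S (tstar C)) ->
    adequate S (@tmul Sigma) /\
    plus_is_Rstar_idem S (@tmul Sigma) (@tplus Sigma) /\
    star_is_Lstar_idem S (@tmul Sigma) (@tstar Sigma) ) /\
  ( (forall C D, S C -> S D -> S (tmul C D)) ->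
    (forall C, S C -> S (tplus C)) ->
    left_adequate S (@tmul Sigma) /\
    plus_is_Rstar_idem S (@tmul Sigma) (@tplus Sigma) ) /\
  ( (forall C D, S C -> S D -> S (tmul C D)) ->
    (forall C, S C -> S (tstar C)) ->
    right_adequate S (@tmul Sigma) /\
    star_is_Lstar_idem S (@tmul Sigma) (@tstar Sigma) ).
Proof.
move=> hT1.
have L : forall (hm : forall C D, S C -> S D -> S (tmul C D)),
    (forall C, S C -> S (tplus C)) ->
    left_adequate S (@tmul Sigma) /\ plus_is_Rstar_idem S (@tmul Sigma) (@tplus Sigma).
  move=> hm hp; have po := @plus_ok _ S hT1 hm hp.
  split=> //; split; first exact: (@semigroup _ S hT1 hm).
  split; first exact: (@idems_comm _ S hT1 hm).
  by move=> a Sa; exists (tplus a); apply: po.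
have R : forall (hm : forall C D, S C -> S D -> S (tmul C D)),
    (forall C, S C -> S (tstar C)) ->
    right_adequate S (@tmul Sigma) /\ star_is_Lstar_idem S (@tmul Sigma) (@tstar Sigma).
  move=> hm hs; have so := @star_ok _ S hT1 hm hs.
  split=> //; split; first exact: (@semigroup _ S hT1 hm).
  split; first exact: (@idems_comm _ S hT1 hm).
  by move=> a Sa; exists (tstar a); apply: so.
split.
  move=> hm hp hs; have [l1 l2] := L hm hp; have [r1 r2] := R hm hs.
  by split; [split|split].
by split; [apply: L | apply: R].
Qed.
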